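(* For any natural numbers $N,d \geq 1$, \[ \sum_{m \in \Sigma_{d,N}} \frac{1}{m} < + \infty.\]
   Context: For $N\ge1$ let $\Pi_N=\{\prod_{n=1}^N n^{k_n} : k_n\in\{0,1,2,\dots\}\}$ and for $d\ge1$ let $\Sigma_{d,N}=\{m_1+\dots+m_d : m_i\in\Pi_N\}$ (a set of positive integers; the sum runs over distinct elements). *)

(* Defs.v *)
From mathcomp Require Import all_boot all_order all_algebra.
From mathcomp Require Import all_classical all_reals ereal esum.
Set Implicit Arguments. Unset Strict Implicit. Unset Printing Implicit Defensive.
Import Order.TTheory GRing.Theory Num.Theory.
Local Open Scope classical_set_scope.

Definition Pi (N : nat) : set nat :=
  [set m | exists k : nat -> nat, m = (\prod_(1 <= n < N.+1) n ^ k n)%N].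

Definition Sigma (d N : nat) : set nat :=
  [set s | exists m : 'I_d -> nat, (forall i, Pi N (m i)) /\ s = (\sum_(i < d) m i)%N].

(* Main.v *)
Require Import Defs.
From mathcomp Require Import all_boot all_order all_algebra.
From mathcomp Require Import all_classical all_reals ereal esum.
From mathcomp Require Import ring lra.
Import Order.TTheory GRing.Theory Num.Theory.
Local Open Scope classical_set_scope.
Local Open Scope ring_scope.

Definition expo_ok (d N s : nat) (v : 'I_d * 'I_N -> nat) :=
  s = (\sum_(i < d) \prod_(j < N) (j.+1) ^ v (i, j))%N /\
  (forall p : 'I_d * 'I_N, p.2 = 0%N :> nat -> v p = 0%N).

Lemma Sigma_expo d N s : Sigma d N s -> exists v, expo_ok d N s v.
Proof.
case=> m [hm ->].
exists (fun p : 'I_d * 'I_N => if (p.2 : nat) == 0%N then 0%N else projT1 (cid (hm p.1)) (p.2).+1).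
split; last by move=> p /= ->.
apply: eq_bigr => i _ /=.
case: (cid (hm i)) => k /= ->.
rewrite big_add1 /= big_mkord; apply: eq_bigr => j _.
by case: ifP => // /eqP ->; rewrite !exp1n.
Qed.

Lemma expo_2 {d N s v} : expo_ok d N s v -> forall p, (2 ^ v p <= s)%N.
Proof.
move=> [-> h0] [i j] /=.
apply: (@leq_trans (\prod_(j0 < N) j0.+1 ^ v (i, j0))); last first.
  by rewrite (bigD1 i) //= leq_addr.
apply: (@leq_trans (j.+1 ^ v (i, j))); last first.
  rewrite (bigD1 j) //= leq_pmulr // prodn_cond_gt0 // => k _.
  by rewrite expn_gt0.
case: (posnP j) => [j0|jp]; first by rewrite (h0 (i, j)).
by case: (v (i, j)) => [|e] //; rewrite leq_exp2r.
Qed.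

Lemma bern (R : realFieldType) (x : R) n : 0 <= x -> x <= 1 ->
  1 - n%:R * x <= (1 - x) ^+ n.
Proof.
move=> x0 x1; elim: n => [|n IH]; first by rewrite mul0r subr0 expr0.
rewrite exprSr -natr1.
have hn : 0 <= n%:R :> R by [].
have hx : 0 <= 1 - x by rewrite subr_ge0.
have := ler_wpM2r hx IH.
nra.
Qed.

Lemma geo (R : realFieldType) (a : R) n : 0 <= a -> a < 1 ->
  \sum_(i < n) a ^+ i <= (1 - a)^-1.
Proof.
move=> a0 a1.
have ha : 0 < 1 - a by rewrite subr_gt0.
have e : \sum_(i < n) a ^+ i = (1 - a)^-1 * (1 - a ^+ n).
  apply: (mulfI (lt0r_neq0 ha)); rewrite mulrA mulfV ?lt0r_neq0 // mul1r.
  have := subrX1 a n; move=> h.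
  by rewrite -[1 - a ^+ n]opprB h -[1 - a]opprB mulNr.
rewrite e; apply: ler_piMr; first by rewrite invr_ge0 ltW.
by have := exprn_ge0 n a0; lra.
Qed.

Lemma inv_le (R : realFieldType) d N s v (a : R) : expo_ok d N s v ->
  0 <= a -> a <= 1 -> 2^-1 <= a ^+ #|{: 'I_d * 'I_N}| ->
  (0 < #|{: 'I_d * 'I_N}|)%N ->
  (s%:R : R)^-1 <= \prod_p a ^+ v p.
Proof.
move=> hv a0 a1 hD hpos.
have [p0 hK] := bigop.eq_bigmax v hpos.
set K := (\max_p v p)%N in hK.
have h2 : (2 ^ K <= s)%N by rewrite hK (expo_2 hv).
have h2p : (0 < 2 ^ K)%N by rewrite expn_gt0.
apply: (@le_trans _ _ ((2 ^ K)%:R^-1)).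
  rewrite lef_pV2 ?ler_nat // posrE ltr0n //.
  exact: leq_trans h2.
rewrite natrX -exprVn.
apply: (@le_trans _ _ ((a ^+ #|{: 'I_d * 'I_N}|) ^+ K)).
  by rewrite lerXn2r // nnegrE ?invr_ge0 ?exprn_ge0.
rewrite -exprM prodrXr ler_wiXn2l //.
apply: (@leq_trans (\sum_(p : 'I_d * 'I_N) K)%N).
  by apply: leq_sum => p _; exact: leq_bigmax.
by rewrite sum_nat_const.
Qed.

Lemma seq_bound (R : realFieldType) d N (a : R) (l : seq nat)
  (rep : nat -> 'I_d * 'I_N -> nat) :
  uniq l -> (forall s, s \in l -> expo_ok d N s (rep s)) ->
  0 <= a -> a < 1 -> 2^-1 <= a ^+ #|{: 'I_d * 'I_N}| ->
  (0 < #|{: 'I_d * 'I_N}|)%N ->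
  \sum_(s <- l) (s%:R : R)^-1 <= ((1 - a)^-1) ^+ #|{: 'I_d * 'I_N}|.
Proof.
move=> ul hl a0 a1 hD hpos.
set M := (\max_(s <- l) \max_p rep s p)%N.
have hM s p : s \in l -> (rep s p <= M)%N.
  move=> sl; apply: leq_trans (leq_bigmax p) _.
  exact: (leq_bigmax_seq (F := fun s => \max_p rep s p)).
pose phi s : {ffun 'I_d * 'I_N -> 'I_M.+1} := [ffun p => inord (rep s p)].
have phiE s p : s \in l -> (phi s p : nat) = rep s p.
  by move=> sl; rewrite ffunE inordK // ltnS hM.
have inj : {in l &, injective phi}.
  move=> s1 s2 h1 h2 e.
  rewrite (proj1 (hl s1 h1)) (proj1 (hl s2 h2)).
  apply: eq_bigr => i _; apply: eq_bigr => j _.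
  by rewrite -(phiE s1 (i, j) h1) -(phiE s2 (i, j) h2) e.
apply: (@le_trans _ _ (\sum_(s <- l) \prod_p a ^+ (phi s p))).
  rewrite big_seq [X in _ <= X]big_seq; apply: ler_sum => s sl.
  rewrite (eq_bigr (fun p => a ^+ rep s p)); last by move=> p _; rewrite phiE.
  exact: (@inv_le R d N s (rep s) a (hl s sl) a0 (ltW a1) hD hpos).
rewrite -(big_map phi xpredT (fun f => \prod_p a ^+ f p)).
rewrite big_uniq; last by rewrite map_inj_in_uniq.
apply: (@le_trans _ _ (\sum_f \prod_p a ^+ (f : {ffun 'I_d * 'I_N -> 'I_M.+1}) p)).
  rewrite [X in _ <= X](bigID (mem (map phi l))) /= lerDl.
  by apply: sumr_ge0 => f _; apply: prodr_ge0 => p _; exact: exprn_ge0.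
rewrite -(bigA_distr_bigA (fun (p : 'I_d * 'I_N) (k : 'I_M.+1) => a ^+ k)) /=.
rewrite prodr_const lerXn2r // ?nnegrE ?geo //.
  by apply: sumr_ge0 => k _; exact: exprn_ge0.
by rewrite invr_ge0 subr_ge0 ltW.
Qed.

Definition repf d N (s : nat) : 'I_d * 'I_N -> nat :=
  match pselect (exists v, expo_ok d N s v) with
  | left h => projT1 (cid h)
  | right _ => fun _ => 0%N
  end.

Lemma repfP d N s : Sigma d N s -> expo_ok d N s (repf d N s).
Proof.
rewrite /repf => hs; case: pselect => [h|h]; first exact: projT2 (cid h).
by exfalso; apply: h; exact: Sigma_expo.
Qed.

Theorem proposition6p10 (R : realType) (N d : nat) (hN : (1 <= N)%N) (hd : (1 <= d)%N) :
  (\esum_(m in Sigma d N) ((m%:R : R)^-1)%:E < +oo)%E.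
Proof.
set D := #|{: 'I_d * 'I_N}|.
have hD : (0 < D)%N by rewrite /D card_prod !card_ord muln_gt0 hd hN.
set a : R := 1 - ((2 * D)%:R)^-1.
have hx0 : 0 < ((2 * D)%:R : R)^-1 by rewrite invr_gt0 ltr0n muln_gt0.
have hx1 : ((2 * D)%:R : R)^-1 <= 1.
  by rewrite invf_le1 ?ltr0n ?muln_gt0 // ler1n muln_gt0.
have a0 : 0 <= a by rewrite /a subr_ge0.
have a1 : a < 1 by rewrite /a ltrBlDr ltrDl.
have haD : 2^-1 <= a ^+ D.
  apply: le_trans (@bern R _ D (ltW hx0) hx1).
  have hD0 : (D%:R : R) != 0 by rewrite pnatr_eq0 -lt0n.
  have e : (D%:R : R) * ((2 * D)%:R)^-1 = 2^-1.
    by rewrite natrM; field.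
  rewrite e.
  have e2 : (2 : R)^-1 = 1 - 2^-1 by field.
  by rewrite {1}e2.
apply: (@le_lt_trans _ _ ((((1 - a)^-1) ^+ D)%:E)); last exact: ltry.
apply: ge_ereal_sup => _ [X [finX XS] <-].
rewrite fsumEFin // lee_fin fsbig_finite //=.
apply: (@seq_bound R d N a _ (repf d N)) => //.
- exact: finmap.fset_uniq.
- move=> s; rewrite in_fset_set // inE => hs; exact: repfP (XS _ hs).
Qed.
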